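(* For the problem $1\mid t_j=1\mid\sum C_j$ with obligatory tests (all test times equal to $1$), no deterministic online algorithm has competitive ratio strictly smaller than $\sqrt2$: for every deterministic algorithm and every $\rho<\sqrt2$ there is an instance on which $\mathit{ALG}>\rho\cdot\mathit{OPT}$.
   Context: Scheduling with obligatory tests and uniform test times: $n$ jobs on a single machine, each with test time $t_j=1$ and an unknown processing time $p_j\ge0$ that is revealed to the algorithm only when the test of $j$ completes. The test of a job must be executed before its processing part (which can be executed any time afterwards); operations are non-preemptive, one at a time. $C_j$ is the completion time of the processing part of $j$; objective $\sum_j C_j$. $\mathit{OPT}$ is the optimal offline objective value (tests also obligatory), $\mathit{ALG}$ the algorithm's value. An online algorithm knows $n$ and the test times in advance. *)

(* Defs.v *)
From HB Require Import structures.
From mathcomp Require Import all_boot all_order all_algebra.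
From mathcomp Require Import fingroup perm.
From mathcomp Require Import reals.
Set Implicit Arguments. Unset Strict Implicit. Unset Printing Implicit Defensive.
Import Order.TTheory GRing.Theory Num.Theory.
Local Open Scope ring_scope.

(* Operations of an instance with n jobs:
   inl j = the test of job j (duration 1), inr j = the processing part of job j
   (duration p j). *)
Notation opT n := ('I_n + 'I_n)%type.

Section Sched.
Variables (R : realType) (n : nat).

Definition nonneg (p : 'I_n -> R) : Prop := forall j, 0 <= p j.

Definition dur (p : 'I_n -> R) (o : opT n) : R :=
  match o with inl _ => 1 | inr j => p j end.

Definition feasible (s : seq (opT n)) : bool :=
  [&& uniq s, size s == (2 * n)%N &
      [forall j : 'I_n, (index (inl j) s < index (inr j) s)%N]].

(* A schedule is a sequence of (idle time before the operation, operation);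
   operations run one at a time, non-preemptively, in this order. *)
Definition compl (p : 'I_n -> R) (s : seq (R * opT n)) (j : 'I_n) : R :=
  \sum_(x <- take (index (inr j) (unzip2 s)).+1 s) (x.1 + dur p x.2).

Definition sumC (p : 'I_n -> R) (s : seq (R * opT n)) : R :=
  \sum_(j < n) compl p s j.

Definition perm_seq (s : {perm opT n}) : seq (opT n) :=
  [seq s x | x <- enum [set: opT n]].

Definition no_idle (s : seq (opT n)) : seq (R * opT n) := [seq (0, o) | o <- s].

Definition canon_order : seq (opT n) :=
  [seq inl j | j <- enum 'I_n] ++ [seq inr j | j <- enum 'I_n].

(* Optimal offline objective: minimum over all feasible orders
   (idle time never helps offline). *)
Definition OPT (p : 'I_n -> R) : R :=
  \big[Num.min/sumC p (no_idle canon_order)]_(s : {perm opT n} | feasible (perm_seq s))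
     sumC p (no_idle (perm_seq s)).

(* A deterministic online algorithm for n jobs: given the sequence of
   operations started so far and the processing times (of which it may only
   use those of already-tested jobs, see [online_alg]), it returns the idle
   time to insert and the next operation to start. *)
Definition algT := seq (opT n) -> ('I_n -> R) -> R * opT n.

Fixpoint run (A : algT) (p : 'I_n -> R) (k : nat) : seq (R * opT n) :=
  match k with
  | 0 => [::]
  | k'.+1 => let h := run A p k' in rcons h (A (unzip2 h) p)
  end.

Definition ALG (A : algT) (p : 'I_n -> R) : R := sumC p (run A p (2 * n)).

End Sched.

(* Well-formed deterministic online algorithm (a family over all n, since the
   algorithm knows n):  non-clairvoyant (decisions depend only on p_j of jobs
   whose test has been executed), nonnegative idle times, and always producing
   a feasible complete schedule. *)
Definition online_alg (R : realType) (A : forall n, algT R n) : Prop :=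
  [/\ (forall n (h : seq (opT n)) (p p' : 'I_n -> R), nonneg p -> nonneg p' ->
         (forall j, inl j \in h -> p j = p' j) -> A n h p = A n h p'),
      (forall n h (p : 'I_n -> R), nonneg p -> 0 <= (A n h p).1) &
      (forall n (p : 'I_n -> R), nonneg p -> feasible (unzip2 (run (A n) p (2 * n))))].

(* Main.v *)
Require Import Defs.
From HB Require Import structures.
From mathcomp Require Import all_boot all_order all_algebra.
From mathcomp Require Import reals.
Import Order.TTheory GRing.Theory Num.Theory.
Local Open Scope ring_scope.
From mathcomp Require Import fingroup perm.
From mathcomp Require Import zify ring lra.
Set Implicit Arguments. Unset Strict Implicit. Unset Printing Implicit Defensive.
Import Order.TTheory GRing.Theory Num.Theory.
Local Open Scope ring_scope.

Section Run.
Variables (R : realType) (n : nat) (A : algT R n).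

Lemma size_run p m : size (run A p m) = m.
Proof. by elim: m => //= m IH; rewrite size_rcons IH. Qed.

Lemma run_take p m M : (m <= M)%N -> take m (run A p M) = run A p m.
Proof.
elim: M => [|M IH]; first by rewrite leqn0 => /eqP ->.
rewrite leq_eqVlt => /orP [/eqP ->|]; first by rewrite -[X in take X _](size_run p M.+1) take_size.
rewrite ltnS => hm /=; rewrite -cats1 takel_cat ?size_run //; exact: IH.
Qed.

Lemma run_agree p p' m :
  (forall m' h, (m' < m)%N -> h = unzip2 (run A p' m') -> A h p = A h p') ->
  run A p m = run A p' m.
Proof.
elim: m => [//|m IH] H /=.
rewrite IH; last by move=> m' h hm; apply: H; apply: ltnW.
by rewrite (H m) //.
Qed.

End Run.


Section Pair.
Variables (R : realType) (n : nat).

Lemma feasible_all (s : seq (opT n)) : feasible s -> forall o, o \in s.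
Proof.
case/and3P => us /eqP ss _ o.
have cs : #|s| = #|{: opT n}| by rewrite (card_uniqP us) ss card_sum card_ord mul2n addnn.
have h := cardC (mem s); rewrite cs in h.
have /card0_eq /(_ o) : #|[predC mem s]| = 0%N.
  by apply/(@addnI #|{: opT n}|); rewrite addn0 h.
by rewrite !inE; case: (o \in s).
Qed.

Definition F (s : seq (opT n)) (p : 'I_n -> R) (j i : 'I_n) : R :=
  ((index (inl i) s <= index (inr j) s)%N)%:R + ((index (inr i) s <= index (inr j) s)%N)%:R * p i.

Lemma compl_split (p : 'I_n -> R) (sch : seq (R * opT n)) j :
  feasible (unzip2 sch) ->
  compl p sch j = \sum_(x <- take (index (inr j) (unzip2 sch)).+1 sch) x.1
                  + \sum_i F (unzip2 sch) p j i.
Proof.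
move=> fs; rewrite /compl big_split /=; congr (_ + _).
set s := unzip2 sch; set m := (index (inr j) s).+1.
have -> : \sum_(x <- take m sch) dur p x.2 = \sum_(o <- take m s) dur p o.
  by rewrite /s -map_take big_map.
have us : uniq (take m s) by apply: take_uniq; case/and3P: fs.
rewrite big_uniq // big_mkcond big_sumType /= -big_split /=.
apply: eq_bigr => i _.
rewrite !in_take ?feasible_all // /F /= !ltnS.
by case: (_ <= _)%N; case: (_ <= _)%N; rewrite /= ?mul1r ?mul0r ?addr0 ?add0r.
Qed.

End Pair.


Lemma core (R : realType) (ai bi aj bj : nat) (xi xj : bool) :
  (ai < bi)%N -> (aj < bj)%N -> bi != bj -> (xi && ~~xj -> ai < aj)%N -> (xj && ~~xi -> aj < ai)%N ->
  2 - (1 - xi%:R) * (1 - xj%:R) <=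
  ((ai <= bj)%N%:R + (bi <= bj)%N%:R * xi%:R + ((aj <= bi)%N%:R + (bj <= bi)%N%:R * xj%:R) :> R).
Proof.
move=> h1 h2 h3 h4 h5.
case: xi h4 h5; case: xj => /= h4 h5;
case: (leqP ai bj); case: (leqP bi bj); case: (leqP aj bi); case: (leqP bj bi) => /= *;
  rewrite ?mulr1 ?mulr0 ?addr0 ?add0r; first [lra | (exfalso; lia) | idtac].
Qed.

Section LB.
Variables (R : realType) (n : nat).

Definition ind (X : {set 'I_n}) (i : 'I_n) : R := (i \in X)%:R.

Lemma sum_ind X : \sum_i ind X i = #|X|%:R.
Proof.
rewrite /ind -sumr_const [RHS]big_mkcond /=; apply: eq_bigr => i _; by case: (i \in X).
Qed.

Lemma sum_sq (c : 'I_n -> R) : \sum_j \sum_i c i * c j = (\sum_i c i) ^+ 2.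
Proof. by rewrite expr2 mulr_suml; apply: eq_bigr => j _; rewrite mulr_sumr; apply: eq_bigr => i _; rewrite mulrC. Qed.

Lemma sum_diag (c : 'I_n -> R) : \sum_j \sum_i (i == j)%:R * c i = \sum_j c j.
Proof.
apply: eq_bigr => j _; rewrite (bigD1 j) //= eqxx mul1r big1 ?addr0 // => i /negbTE ->; by rewrite mul0r.
Qed.

Lemma sum_lb X :
  \sum_j \sum_i (2 - (1 - ind X i) * (1 - ind X j) + (i == j)%:R * (1 + ind X i))
  = 2 * n%:R ^+ 2 - (n%:R - #|X|%:R) ^+ 2 + n%:R + #|X|%:R.
Proof.
have -> : \sum_(j < n) \sum_(i < n) (2 - (1 - ind X i) * (1 - ind X j) + (i == j)%:R * (1 + ind X i))
  = \sum_(j < n) (\sum_(i < n) (2:R) - \sum_i (1 - ind X i) * (1 - ind X j) + \sum_i (i == j)%:R * (1 + ind X i)).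
  by apply: eq_bigr => j _; rewrite big_split sumrB.
rewrite big_split sumrB /=.
rewrite sum_sq sum_diag. rewrite [X in _ + X = _]big_split /= sumrB sum_ind !sumr_const card_ord.
ring.
Qed.

Lemma pair_lb (s : seq (opT n)) (X : {set 'I_n}) :
  feasible s ->
  (forall i j, i \in X -> j \notin X -> (index (inl i) s < index (inl j) s)%N) ->
  2 * n%:R ^+ 2 - (n%:R - #|X|%:R) ^+ 2 + n%:R + #|X|%:R <= 2 * \sum_j \sum_i F s (ind X) j i.
Proof.
move=> fs hX.
have fa := feasible_all fs.
have ab : forall i, (index (inl i) s < index (inr i) s)%N.
  by move=> i; case/and3P: fs => _ _ /forallP.
have bb : forall i j, i != j -> index (inr i) s != index (inr j) s.
  move=> i j; apply: contra => /eqP e; apply/eqP.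
  have := nth_index (inl i) (fa (inr i)); rewrite e nth_index ?fa //; by case.
have -> : 2 * \sum_j \sum_i F s (ind X) j i = \sum_j \sum_i (F s (ind X) j i + F s (ind X) i j).
  have two : forall x : R, 2 * x = x + x by move=> x; ring.
  rewrite two; rewrite [X in _ + X = _]exchange_big /= -big_split; apply: eq_bigr => j _.
  by rewrite -big_split.
rewrite -sum_lb; apply: ler_sum => j _; apply: ler_sum => i _.
rewrite /F /ind.
case: (eqVneq i j) => [->|nij].
  rewrite leqnn (ltnW (ab j)) /=; case: (j \in X); rewrite /=; lra.
rewrite mul0r addr0.
apply: core; [exact: ab | exact: ab | exact: bb | |].
  by case/andP => h1 h2; apply: hX.
by case/andP => h1 h2; apply: hX.
Qed.

End LB.


Section UB.
Variables (R : realType) (n : nat).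

Lemma size_enumT : size (enum [set: opT n]) = (2 * n)%N.
Proof. by rewrite -cardE cardsT card_sum card_ord mul2n addnn. Qed.

Lemma perm_of_seq (s : seq (opT n)) : uniq s -> size s = (2 * n)%N ->
  exists pi : {perm opT n}, perm_seq pi = s.
Proof.
move=> us ss.
set e := enum [set: opT n].
have ue : uniq e := enum_uniq _.
have se : size e = size s by rewrite size_enumT ss.
have me : forall x, x \in e by move=> x; rewrite mem_enum inE.
pose f := fun x => nth x s (index x e).
have fi : injective f.
  move=> x y; rewrite /f.
  have hx : (index x e < size s)%N by rewrite -se index_mem.
  have hy : (index y e < size s)%N by rewrite -se index_mem.
  rewrite (set_nth_default x y hy) => /eqP; rewrite nth_uniq // => /eqP h.
  by rewrite -(nth_index x (me x)) h nth_index.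
exists (perm fi); rewrite /perm_seq -/e.
have -> : [seq perm fi x | x <- e] = [seq f x | x <- e] by apply: eq_map => x; rewrite permE.
case E: e se => [|x0 e'] se'.
  by apply/esym/size0nil; rewrite -se'.
rewrite -E in se' *.
apply: (@eq_from_nth _ x0); first by rewrite size_map.
move=> i; rewrite size_map => hi.
rewrite (nth_map x0) // /f index_uniq //; apply: set_nth_default; by rewrite -se'.
Qed.
End UB.

Section D.
Variables (R : realType) (n : nat).

Definition pairs (L : seq 'I_n) : seq (opT n) := flatten [seq [:: inl j; inr j] | j <- L].

Lemma size_pairs L : size (pairs L) = (2 * size L)%N.
Proof. elim: L => //= y L IH; rewrite /pairs /= in IH *; rewrite IH; lia. Qed.

Lemma index_pairs L x : x \in L ->
  index (inl x) (pairs L) = (2 * index x L)%N /\ index (inr x) (pairs L) = (2 * index x L).+1.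
Proof.
elim: L => [|y L IH] //; rewrite inE.
case: (eqVneq x y) => [->|nyx] /= hx; first by rewrite !eqxx.
case: (IH hx) => IH1 IH2; rewrite /pairs /= in IH1 IH2 *.
rewrite eq_sym in nyx.
have e1 : (inl y == inl x :> opT n) = false by apply/negbTE; apply: contra nyx => /eqP [->].
have e4 : (inr y == inr x :> opT n) = false by apply/negbTE; apply: contra nyx => /eqP [->].
rewrite e1 e4 (negbTE nyx) IH1 IH2 /=; split; lia.
Qed.

Variable X : {set 'I_n}.

Definition Lz : seq 'I_n := filter (fun j => j \notin X) (enum 'I_n) ++ filter (fun j => j \in X) (enum 'I_n).

Lemma Lz_mem j : j \in Lz.
Proof. by rewrite mem_cat mem_filter mem_enum mem_filter mem_enum !andbT; case: (j \in X). Qed.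
Lemma Lz_size : size Lz = n.
Proof.
rewrite size_cat !size_filter addnC.
apply: etrans (count_predC (fun j => j \in X) (enum 'I_n)) _; exact: size_enum_ord.
Qed.

Lemma Lz_order i j : i \notin X -> j \in X -> (index i Lz < index j Lz)%N.
Proof.
move=> hi hj; rewrite !index_cat.
have -> : i \in filter (fun j => j \notin X) (enum 'I_n) by rewrite mem_filter hi mem_enum.
have -> : j \in filter (fun j => j \notin X) (enum 'I_n) = false by rewrite mem_filter hj.
apply: (leq_trans _ (leq_addr _ _)); by rewrite index_mem mem_filter hi mem_enum.
Qed.

Definition Dord := pairs Lz.

Lemma Dord_feasible : feasible Dord.
Proof.
have sD : size Dord = (2 * n)%N by rewrite size_pairs Lz_size.
have mD : forall o, o \in Dord.
  case=> j; rewrite -index_mem sD; have [h1 h2] := index_pairs (Lz_mem j);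
  rewrite ?h1 ?h2; have := Lz_mem j; rewrite -index_mem Lz_size; lia.
apply/and3P; split.
- apply/card_uniqP; rewrite sD.
  rewrite (eq_card (B := predT)); last by move=> o; rewrite mD.
  by rewrite card_sum card_ord mul2n addnn.
- by rewrite sD.
- apply/forallP => j; have [h1 h2] := index_pairs (Lz_mem j); rewrite h1 h2; lia.
Qed.

End D.


Lemma core2 (R : realType) (ri rj : nat) (xi xj : bool) :
  ri != rj -> (~~ xi && xj -> ri < rj)%N -> (~~ xj && xi -> rj < ri)%N ->
  ((2 * ri <= (2 * rj).+1)%N%:R + ((2 * ri).+1 <= (2 * rj).+1)%N%:R * xi%:R
   + ((2 * rj <= (2 * ri).+1)%N%:R + ((2 * rj).+1 <= (2 * ri).+1)%N%:R * xj%:R) :> R)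
  <= 1 + xi%:R * xj%:R.
Proof.
move=> h1 h2 h3.
case: xi h2 h3; case: xj => /= h2 h3;
case: (leqP (2 * ri) (2 * rj).+1); case: (leqP (2 * ri).+1 (2 * rj).+1);
case: (leqP (2 * rj) (2 * ri).+1); case: (leqP (2 * rj).+1 (2 * ri).+1) => /= *;
  rewrite ?mulr1 ?mulr0 ?addr0 ?add0r; first [lra | (exfalso; lia) | idtac].
Qed.

Section OPTB.
Variables (R : realType) (n : nat).

Lemma sumC_noidle (s : seq (opT n)) (p : 'I_n -> R) : feasible s ->
  sumC p (no_idle R s) = \sum_j \sum_i F s p j i.
Proof.
move=> fs.
have u2 : unzip2 (no_idle R s) = s by rewrite /unzip2 /no_idle -map_comp map_id.
rewrite /sumC; apply: eq_bigr => j _.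
rewrite compl_split u2 //.
rewrite /no_idle -map_take big_map big1 ?add0r //.
Qed.

Lemma sum_ub (X : {set 'I_n}) :
  \sum_j \sum_i (1 + ind R X i * ind R X j + (i == j)%:R * (1 + ind R X i))
  = n%:R ^+ 2 + #|X|%:R ^+ 2 + n%:R + #|X|%:R.
Proof.
have -> : \sum_(j < n) \sum_(i < n) (1 + ind R X i * ind R X j + (i == j)%:R * (1 + ind R X i))
  = \sum_(j < n) (\sum_(i < n) (1:R) + \sum_i ind R X i * ind R X j + \sum_i (i == j)%:R * (1 + ind R X i)).
  by apply: eq_bigr => j _; rewrite !big_split.
rewrite !big_split /= sum_sq sum_diag big_split /= sum_ind !sumr_const card_ord.
ring.
Qed.

Lemma Dord_bound (X : {set 'I_n}) :
  2 * \sum_j \sum_i F (Dord X) (ind R X) j i <= n%:R ^+ 2 + #|X|%:R ^+ 2 + n%:R + #|X|%:R.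
Proof.
have two : forall x : R, 2 * x = x + x by move=> x; ring.
have -> : 2 * \sum_j \sum_i F (Dord X) (ind R X) j i
   = \sum_j \sum_i (F (Dord X) (ind R X) j i + F (Dord X) (ind R X) i j).
  rewrite two; rewrite [X in _ + X = _]exchange_big /= -big_split; apply: eq_bigr => j _.
  by rewrite -big_split.
rewrite -sum_ub; apply: ler_sum => j _; apply: ler_sum => i _.
rewrite /F /ind /Dord.
have [a1 a2] := index_pairs (Lz_mem X i).
have [b1 b2] := index_pairs (Lz_mem X j).
rewrite a1 a2 b1 b2.
case: (eqVneq i j) => [->|nij].
  rewrite leqnn leqnSn /=; case: (j \in X); rewrite /=; lra.
rewrite mul0r addr0.
apply: core2.
- apply: contra nij => /eqP e.
  by rewrite -(nth_index i (Lz_mem X i)) e nth_index ?Lz_mem.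
- by case/andP => h1 h2; apply: Lz_order.
- by case/andP => h1 h2; apply: Lz_order.
Qed.

Lemma OPT_ub (X : {set 'I_n}) :
  2 * OPT (ind R X) <= n%:R ^+ 2 + #|X|%:R ^+ 2 + n%:R + #|X|%:R.
Proof.
have fD := Dord_feasible X.
have [pi hpi] : exists pi : {perm opT n}, perm_seq pi = Dord X.
  by case/and3P: fD => u /eqP s _; apply: perm_of_seq.
apply: le_trans (Dord_bound X).
rewrite -sumC_noidle // -hpi ler_pM2l // /OPT.
apply: bigmin_le_cond; by rewrite hpi.
Qed.

End OPTB.


Lemma ivt (c : nat -> nat) k M : c 0%N = 0%N -> (k <= c M)%N -> (forall m, c m.+1 <= (c m).+1)%N ->
  exists m, (m <= M)%N /\ c m = k.
Proof.
move=> c0 hk hs; elim: M hk => [|M IH] hk.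
  by exists 0%N; split => //; move: hk; rewrite c0; lia.
case: (leqP k (c M)) => h.
  by case: (IH h) => m [hm e]; exists m; split => //; lia.
exists M.+1; split => //; have := hs M; lia.
Qed.

Section Main.
Variables (R : realType) (n : nat) (A : algT R n).

Lemma run_idle (p : 'I_n -> R) : (forall h, 0 <= (A h p).1) ->
  forall m x, x \in run A p m -> 0 <= x.1.
Proof.
move=> H; elim=> [//|m IH] x /=; rewrite mem_rcons inE => /orP [/eqP ->|]; [exact: H | exact: IH].
Qed.

Lemma sumC_ge (p : 'I_n -> R) (sch : seq (R * opT n)) :
  feasible (unzip2 sch) -> (forall x, x \in sch -> 0 <= x.1) ->
  \sum_j \sum_i F (unzip2 sch) p j i <= sumC p sch.
Proof.
move=> fs hi; rewrite /sumC; apply: ler_sum => j _.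
rewrite compl_split // lerDr big_seq; apply: sumr_ge0 => x /mem_take; exact: hi.
Qed.

Lemma sumC_ge0 (p : 'I_n -> R) (sch : seq (R * opT n)) :
  nonneg p -> (forall x, x \in sch -> 0 <= x.1) -> 0 <= sumC p sch.
Proof.
move=> hp hi; apply: sumr_ge0 => j _; rewrite /compl big_seq; apply: sumr_ge0 => x /mem_take hx.
apply: addr_ge0; first exact: hi.
by case: x.2 => /=.
Qed.

Lemma OPT_ge0 (p : 'I_n -> R) : nonneg p -> 0 <= OPT p.
Proof.
move=> hp; apply: le_bigmin => [|pi _]; apply: sumC_ge0 => // x /mapP [o _ ->] //.
Qed.

End Main.

Lemma ind_nonneg (R : realType) n (X : {set 'I_n}) : nonneg (ind R X).
Proof. by move=> j; rewrite /ind; case: (j \in X). Qed.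

Lemma instance (R : realType) (A : forall n, algT R n) : online_alg A ->
  forall n k, (k <= n)%N -> exists X : {set 'I_n}, #|X| = k /\
   2 * n%:R ^+ 2 - (n%:R - k%:R) ^+ 2 + n%:R + k%:R <= 2 * ALG (A n) (ind R X).
Proof.
case=> hna hid hfe n k hk.
pose p1 := fun _ : 'I_n => (1 : R).
have p1n : nonneg p1 by move=> j; rewrite /p1.
pose r1 := run (A n) p1.
pose Xm m := [set j | inl j \in unzip2 (r1 m)].
have c0 : #|Xm 0%N| = 0%N by apply: eq_card0 => j; rewrite inE.
have cM : #|Xm (2 * n)%N| = n.
  rewrite -[RHS]card_ord; apply: eq_card => j; rewrite inE.
  by rewrite (feasible_all (hfe n p1 p1n)).
have cS : forall m, (#|Xm m.+1| <= #|Xm m|.+1)%N.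
  move=> m; rewrite /Xm /r1 /= /unzip2 map_rcons.
  set o := (A n _ p1).2.
  have [j0 hj0] : exists j0, o = inl j0 \/ o = inr j0 by case: o => j; exists j; auto.
  apply: (leq_trans (subset_leq_card (_ : _ \subset j0 |: Xm m))).
    apply/subsetP => j; rewrite !inE mem_rcons inE => /orP [/eqP e|->]; last by rewrite orbT.
    by case: hj0 e => -> // [->]; rewrite eqxx.
  by rewrite cardsU1; case: (j0 \in Xm m).
have hk' : (k <= #|Xm (2 * n)%N|)%N by rewrite cM.
have [m [hm cm]] := ivt (c := fun m => #|Xm m|) c0 hk' cS.
exists (Xm m); split => //.
set X := Xm m.
have pn := ind_nonneg R X.
have agree : run (A n) (ind R X) m = r1 m.
  apply: run_agree => m' h hm' ->; apply: hna => // j hj.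
  have : j \in X.
    rewrite -(run_take (A n) p1 (ltnW hm')) /unzip2 map_take in hj.
    by rewrite inE; apply: mem_take hj.
  by rewrite /ind /p1 => ->.
set sch := run (A n) (ind R X) (2 * n).
have fs : feasible (unzip2 sch) by apply: hfe.
have tk : take m (unzip2 sch) = unzip2 (r1 m).
  by rewrite /unzip2 -map_take /sch run_take // agree.
have hX : forall i j, i \in X -> j \notin X ->
    (index (inl i) (unzip2 sch) < index (inl j) (unzip2 sch))%N.
  move=> i j hi hj.
  have h1 : (index (inl i) (unzip2 sch) < m)%N by apply: index_ltn; rewrite tk; rewrite inE in hi.
  have : inl j \notin take m (unzip2 sch) by rewrite tk; rewrite inE in hj.
  rewrite in_take ?feasible_all // -leqNgt => h2; exact: leq_trans h1 h2.
have := @pair_lb R n _ _ fs hX; rewrite cm => h.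
apply: (le_trans h); rewrite ler_pM2l //.
apply: sumC_ge => //; apply: run_idle => hh; exact: hid.
Qed.


Lemma final_ineq (R : realType) (s2 t d a b : R) :
  s2 ^+ 2 = 2 -> 0 <= s2 -> 0 <= t -> d = s2 - t * (2 + s2) -> s2 / 2 + 1 < d * a -> 1 <= a ->
  0 <= b -> b <= s2 * a -> s2 * a < b + 1 ->
  t * ((a + b) ^+ 2 + a ^+ 2 + (a + b) + a) < 2 * a * b.
Proof.
move=> hs hs0 ht hd hda ha hb0 hb1 hb2.
have s1 : (a + b) ^+ 2 <= (a + s2 * a) ^+ 2.
  rewrite ler_sqr ?nnegrE; nra.
have s1' : (a + s2 * a) ^+ 2 = a ^+ 2 * (2 + 2 * s2 + 1).
  rewrite !expr2 in hs *; nra.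
have B : (a + b) ^+ 2 + a ^+ 2 + (a + b) + a <= (2 + s2) * (2 * a ^+ 2 + a).
  rewrite s1' in s1; nra.
have T : t * ((a + b) ^+ 2 + a ^+ 2 + (a + b) + a) <= (s2 - d) * (2 * a ^+ 2 + a).
  rewrite hd; have -> : s2 - (s2 - t * (2 + s2)) = t * (2 + s2) by ring.
  rewrite -mulrA; apply: ler_wpM2l => //.
have dpos : 0 < d * a by nra.
have : 2 * a * b > 2 * s2 * a ^+ 2 - 2 * a by rewrite expr2; nra.
have : (s2 - d) * (2 * a ^+ 2 + a) <= 2 * s2 * a ^+ 2 - 2 * a.
  rewrite expr2; nra.
lra.
Qed.

Theorem theorem3 (R : realType) (A : forall n, algT R n) :
  online_alg A ->
  forall rho : R, rho < Num.sqrt 2 ->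
  exists (n : nat) (p : 'I_n -> R), nonneg p /\ rho * OPT p < ALG (A n) p.
Proof.
move=> hA rho hr.
set s2 := Num.sqrt (2 : R).
have s2ge0 : 0 <= s2 by apply: sqrtr_ge0.
have s2sq : s2 ^+ 2 = 2 by rewrite /s2 sqr_sqrtr.
have s21 : 1 < s2 by rewrite expr2 in s2sq; nra.
set r := Num.max rho 1.
have rr : rho <= r by rewrite le_max lexx.
have r1 : 1 <= r by rewrite le_max lexx orbT.
have rs : r < s2 by rewrite gt_max hr s21.
set t := r - 1.
set d := s2 - t * (2 + s2).
have dpos : 0 < d.
  have : t * (2 + s2) < (s2 - 1) * (2 + s2) by rewrite ltr_pM2r; [rewrite /t; lra | lra].
  rewrite /d; rewrite expr2 in s2sq; nra.
set N := (Num.truncn ((s2 / 2 + 1) / d)).+1.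
have hN : s2 / 2 + 1 < d * N%:R.
  have := truncnS_gt ((s2 / 2 + 1) / d); rewrite -/N ltr_pdivrMr // => h; by rewrite [d * _]mulrC.
have N1 : 1 <= (N%:R : R) by rewrite ler1n.
set z := Num.truncn (s2 * N%:R).
have hz1 : (z%:R : R) <= s2 * N%:R by rewrite truncn_le; apply: mulr_ge0 => //; lra.
have hz2 : s2 * N%:R < z.+1%:R by apply: truncnS_gt.
have [X [cX hAlg]] := instance hA (leq_addr z N).
exists (N + z)%N, (ind R X); split; first by move=> j; rewrite /ind; case: (j \in X).
have hO := OPT_ub R X; rewrite cX in hO.
have O0 := OPT_ge0 (ind_nonneg R X).
have t0 : 0 <= t by rewrite /t; lra.
have hz3 : s2 * N%:R < z%:R + 1 by rewrite -natr1 in hz2.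
have key := final_ineq s2sq s2ge0 t0 (erefl d) hN N1 (ler0n _ z) hz1 hz3.
rewrite !natrD in hAlg hO.
set O := OPT (ind R X) in hO O0 *.
set L := ALG (A (N + z)%N) (ind R X) in hAlg *.
have h1 : rho * O <= r * O by apply: ler_wpM2r.
have h2 : r * (2 * O) <= r * ((N%:R + z%:R) ^+ 2 + N%:R ^+ 2 + (N%:R + z%:R) + N%:R).
  by apply: ler_wpM2l => //; lra.
have e : r = t + 1 by rewrite /t; ring.
rewrite e in h1 h2.
have h3 : 2 * (N%:R + z%:R) ^+ 2 - (N%:R + z%:R - N%:R) ^+ 2 + (N%:R + z%:R) + N%:R
   = ((N%:R + z%:R) ^+ 2 + N%:R ^+ 2 + (N%:R + z%:R) + N%:R) + 2 * N%:R * z%:R :> R by ring.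
rewrite h3 in hAlg.
lra.
Qed.
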